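(* Let $\Gamma$ be a $W$-generic metric graph, with $W:\Gamma\to\mathbb{R}$ of class $C^1$, and let $f_k$, $\lambda_k$ be the eigenfunctions and eigenvalues of $H_W=-\frac{\partial^2}{\partial x^2}+W$ with Dirichlet boundary and Neumann–Kirchhoff vertex conditions. Let $k_1<\dots<k_M$ and nonzero reals $a_1,\dots,a_M$ be given, and define $g(x,y)=\sum_{i=1}^{M}a_ie^{-\lambda_{k_i}y}f_{k_i}(x)$ for $x\in\Gamma$, $y\in\mathbb{R}$. Then $g$ has no isolated zero $(x_0,y_0)$ with $x_0$ in the interior of an edge.
   Context: A metric graph is connected with finitely many edges of finite length, each identified with an interval. $H_W$ acts edgewise on $\bigoplus_e H^2(e)$ with Dirichlet conditions at degree-one vertices and, at inner vertices (degree $\ge2$), continuity and vanishing sum of the outgoing derivatives. Eigenvalues $\lambda_1\le\lambda_2\le\dots$ are counted with multiplicity, with $L^2$-orthogonal eigenfunctions $f_k$. $\Gamma$ is $W$-generic if no eigenfunction of $H_W$ vanishes at an inner vertex. An isolated zero of $g$ is a zero $(x_0,y_0)$ having a neighbourhood in (edge interior)$\times\mathbb{R}$ containing no other zero of $g$. *)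

(* Defs.v *)
From Stdlib Require Import Reals Lra.
From Coquelicot Require Import Coquelicot.
Open Scope R_scope.

(* ---------- Metric graphs ----------
   Vertices are 0..nV-1, edges 0..nE-1.  Edge e is identified with the
   interval [0, len e]; coordinate 0 is the vertex [src e], coordinate
   [len e] is the vertex [tgt e]. *)
Record metric_graph := MkGraph {
  nV : nat;
  nE : nat;
  src : nat -> nat;
  tgt : nat -> nat;
  len : nat -> R;
  src_ok : forall e, (e < nE)%nat -> (src e < nV)%nat;
  tgt_ok : forall e, (e < nE)%nat -> (tgt e < nV)%nat;
  len_pos : forall e, (e < nE)%nat -> 0 < len e
}.

Definition adjacent (G : metric_graph) (u v : nat) : Prop :=
  exists e, (e < nE G)%nat /\
    ((src G e = u /\ tgt G e = v) \/ (src G e = v /\ tgt G e = u)).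

Inductive reach (G : metric_graph) : nat -> nat -> Prop :=
  | reach_refl : forall v, reach G v v
  | reach_step : forall u v w, reach G u v -> adjacent G v w -> reach G u w.

Definition graph_connected (G : metric_graph) : Prop :=
  forall u v, (u < nV G)%nat -> (v < nV G)%nat -> reach G u v.

Fixpoint sumn_R (n : nat) (f : nat -> R) : R :=
  match n with O => 0 | S m => sumn_R m f + f m end.

(* degree of a vertex (a loop contributes 2) *)
Fixpoint count_nat (n : nat) (P : nat -> bool) : nat :=
  match n with O => O | S m => (count_nat m P + (if P m then 1 else 0))%nat end.

Definition degree (G : metric_graph) (v : nat) : nat :=
  (count_nat (nE G) (fun e => Nat.eqb (src G e) v) +
   count_nat (nE G) (fun e => Nat.eqb (tgt G e) v))%nat.

Definition inner_vertex (G : metric_graph) (v : nat) : Prop :=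
  (v < nV G)%nat /\ (2 <= degree G v)%nat.

Definition boundary_vertex (G : metric_graph) (v : nat) : Prop :=
  (v < nV G)%nat /\ degree G v = 1%nat.

(* A function on the graph: edgewise, F e t for t in [0, len e]. *)
Definition gfun := nat -> R -> R.

Definition cont_on (a b : R) (f : R -> R) : Prop :=
  forall t, a <= t <= b ->
    filterlim f (within (fun u => a <= u <= b) (locally t)) (locally (f t)).

(* f is C^1 on [a,b]: derivative on (a,b) which extends continuously to [a,b];
   df is that derivative (its endpoint values are the one-sided derivatives). *)
Definition C1_on (a b : R) (f df : R -> R) : Prop :=
  cont_on a b f /\ cont_on a b df /\
  forall t, a < t < b -> is_derive f t (df t).

Definition vertex_values_eq (G : metric_graph) (F : gfun) (v : nat) (c : R) : Prop :=
  forall e, (e < nE G)%nat ->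
    (src G e = v -> F e 0 = c) /\ (tgt G e = v -> F e (len G e) = c).

Definition continuous_at_vertex (G : metric_graph) (F : gfun) (v : nat) : Prop :=
  exists c, vertex_values_eq G F v c.

Definition vanishes_at_vertex (G : metric_graph) (F : gfun) (v : nat) : Prop :=
  exists e, (e < nE G)%nat /\
    ((src G e = v /\ F e 0 = 0) \/ (tgt G e = v /\ F e (len G e) = 0)).

Definition out_deriv_sum (G : metric_graph) (dF : gfun) (v : nat) : R :=
  sumn_R (nE G) (fun e =>
    (if Nat.eqb (src G e) v then dF e 0 else 0) +
    (if Nat.eqb (tgt G e) v then - dF e (len G e) else 0)).

Definition potential_C1 (G : metric_graph) (W : gfun) : Prop :=
  (forall e, (e < nE G)%nat -> exists dW, C1_on 0 (len G e) (W e) (dW e)) /\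
  (forall v, (v < nV G)%nat -> continuous_at_vertex G W v).

(* The edgewise H^2 regularity is rendered classically. *)
Definition is_eigenfunction (G : metric_graph) (W : gfun) (mu : R) (h : gfun) : Prop :=
  exists dh : gfun,
    (forall e, (e < nE G)%nat ->
       C1_on 0 (len G e) (h e) (dh e) /\
       forall t, 0 < t < len G e ->
         ex_derive (dh e) t /\
         - Derive (dh e) t + W e t * h e t = mu * h e t) /\
    (forall v, boundary_vertex G v -> vertex_values_eq G h v 0) /\
    (forall v, inner_vertex G v ->
       continuous_at_vertex G h v /\ out_deriv_sum G dh v = 0) /\
    (exists e t, (e < nE G)%nat /\ 0 < t < len G e /\ h e t <> 0).

Definition L2_inner (G : metric_graph) (f h : gfun) : R :=
  sumn_R (nE G) (fun e => RInt (fun t => f e t * h e t) 0 (len G e)).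

(* (lam k, f k)_{k in nat}: the eigenvalues in nondecreasing order counted
   with multiplicity, with pairwise L^2-orthogonal eigenfunctions; every
   eigenfunction of H_W lies in the span of the f k with the same eigenvalue
   (so the sequence exhausts the spectrum with the right multiplicities). *)
Definition eigen_system (G : metric_graph) (W : gfun) (lam : nat -> R) (f : nat -> gfun) : Prop :=
  (forall k, lam k <= lam (S k)) /\
  (forall k, is_eigenfunction G W (lam k) (f k)) /\
  (forall j k, j <> k -> L2_inner G (f j) (f k) = 0) /\
  (forall mu h, is_eigenfunction G W mu h ->
     exists (N : nat) (c : nat -> R),
       (forall k, lam k <> mu -> c k = 0) /\
       forall e t, (e < nE G)%nat -> 0 <= t <= len G e ->
         h e t = sumn_R N (fun k => c k * f k e t)).

Definition W_generic (G : metric_graph) (W : gfun) : Prop :=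
  forall mu h, is_eigenfunction G W mu h ->
    forall v, inner_vertex G v -> ~ vanishes_at_vertex G h v.

Definition heat_comb (lam : nat -> R) (f : nat -> gfun) (M : nat) (kk : nat -> nat)
  (a : nat -> R) (e : nat) (t y : R) : R :=
  sumn_R M (fun i => a i * exp (- lam (kk i) * y) * f (kk i) e t).

Definition isolated_interior_zero (G : metric_graph) (g : nat -> R -> R -> R)
  (e : nat) (t0 y0 : R) : Prop :=
  (e < nE G)%nat /\ 0 < t0 < len G e /\ g e t0 y0 = 0 /\
  exists delta, 0 < delta /\
    forall t y, 0 < t < len G e -> Rabs (t - t0) < delta -> Rabs (y - y0) < delta ->
      g e t y = 0 -> t = t0 /\ y = y0.

(* Main.v *)
Require Import Defs.
From Stdlib Require Import Reals Lra Lia ClassicalEpsilon.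
From Coquelicot Require Import Coquelicot.
Open Scope R_scope.

Lemma left_deriv_nonpos (chi : R -> R) c y1 D :
  c < y1 -> is_derive chi y1 D -> (forall y, c <= y <= y1 -> chi y1 <= chi y) -> D <= 0.
Proof.
  intros Hc Hd Hm. apply is_derive_Reals in Hd.
  destruct (Rle_dec D 0) as [|Hn]; auto. exfalso.
  assert (HD : 0 < D) by lra.
  destruct (Hd (D/2)) as [del Hdel]; [lra|].
  pose proof (cond_pos del) as Hdp.
  set (h := - Rmin (del/2) ((y1-c)/2)).
  assert (Hh1 : h < 0) by (unfold h; apply Rmin_case; lra).
  assert (Hh2 : - h <= del/2) by (unfold h; rewrite Ropp_involutive; apply Rmin_l).
  assert (Hh3 : - h <= (y1-c)/2) by (unfold h; rewrite Ropp_involutive; apply Rmin_r).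
  specialize (Hdel h ltac:(lra) ltac:(rewrite Rabs_left; lra)).
  specialize (Hm (y1 + h) ltac:(lra)).
  set (q := (chi (y1 + h) - chi y1) / h) in *.
  assert (Hq : q * h = chi (y1 + h) - chi y1) by (unfold q; field; lra).
  apply Rabs_def2 in Hdel. nra.
Qed.

Lemma right_deriv_nonneg (chi : R -> R) b y1 D :
  y1 < b -> is_derive chi y1 D -> (forall y, y1 <= y <= b -> chi y1 <= chi y) -> 0 <= D.
Proof.
  intros Hc Hd Hm. apply is_derive_Reals in Hd.
  destruct (Rle_dec 0 D) as [|Hn]; auto. exfalso.
  assert (HD : D < 0) by lra.
  destruct (Hd (-D/2)) as [del Hdel]; [lra|].
  pose proof (cond_pos del) as Hdp.
  set (h := Rmin (del/2) ((b-y1)/2)).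
  assert (Hh1 : 0 < h) by (unfold h; apply Rmin_case; lra).
  assert (Hh2 : h <= del/2) by (unfold h; apply Rmin_l).
  assert (Hh3 : h <= (b-y1)/2) by (unfold h; apply Rmin_r).
  specialize (Hdel h ltac:(lra) ltac:(rewrite Rabs_right; lra)).
  specialize (Hm (y1 + h) ltac:(lra)).
  set (q := (chi (y1 + h) - chi y1) / h) in *.
  assert (Hq : q * h = chi (y1 + h) - chi y1) by (unfold q; field; lra).
  apply Rabs_def2 in Hdel. nra.
Qed.

Lemma second_deriv_nonneg (psi psi1 : R -> R) a b t1 d2 :
  a < t1 < b -> (forall s, a < s < b -> is_derive psi s (psi1 s)) ->
  is_derive psi1 t1 d2 -> (forall s, a < s < b -> psi t1 <= psi s) ->
  psi1 t1 = 0 /\ 0 <= d2.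
Proof.
  intros Ht Hd1 Hd2 Hm.
  assert (H0 : psi1 t1 = 0).
  { assert (psi1 t1 <= 0).
    { apply (left_deriv_nonpos psi ((a+t1)/2) t1); [lra| apply Hd1; lra|].
      intros y Hy; apply Hm; lra. }
    assert (0 <= psi1 t1).
    { apply (right_deriv_nonneg psi ((t1+b)/2) t1); [lra| apply Hd1; lra|].
      intros y Hy; apply Hm; lra. }
    lra. }
  split; auto.
  destruct (Rle_dec 0 d2) as [|Hn]; auto. exfalso.
  apply is_derive_Reals in Hd2.
  destruct (Hd2 (-d2/2)) as [del Hdel]; [lra|].
  pose proof (cond_pos del) as Hdp.
  set (h := Rmin (del/2) ((b-t1)/2)).
  assert (Hh1 : 0 < h) by (unfold h; apply Rmin_case; lra).
  assert (Hh2 : h <= del/2) by (unfold h; apply Rmin_l).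
  assert (Hh3 : h <= (b-t1)/2) by (unfold h; apply Rmin_r).
  assert (Hneg : forall u, 0 < u <= h -> psi1 (t1 + u) < 0).
  { intros u Hu. specialize (Hdel u ltac:(lra) ltac:(rewrite Rabs_right; lra)).
    rewrite H0 in Hdel. apply Rabs_def2 in Hdel.
    set (q := (psi1 (t1 + u) - 0) / u) in *.
    assert (Hq : q * u = psi1 (t1 + u)) by (unfold q; field; lra). nra. }
  destruct (MVT_cor2 psi psi1 t1 (t1 + h)) as [xi [Hxi1 Hxi2]]; [lra| |].
  { intros c Hc. apply is_derive_Reals. apply Hd1. lra. }
  specialize (Hneg (xi - t1) ltac:(lra)). replace (t1 + (xi - t1)) with xi in Hneg by ring.
  specialize (Hm (t1 + h) ltac:(lra)). nra.
Qed.

Definition ucy (v : R -> R -> R) (a b : R) : Prop :=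
  forall y eta, 0 < eta -> exists rho, 0 < rho /\
    forall y' t, Rabs (y' - y) < rho -> a <= t <= b -> Rabs (v t y' - v t y) < eta.

Lemma min2D (v : R -> R -> R) a b c d :
  a <= b -> c <= d ->
  (forall y t, a <= t <= b -> continuity_pt (fun s => v s y) t) ->
  ucy v a b ->
  exists t1 y1, a <= t1 <= b /\ c <= y1 <= d /\
    forall t y, a <= t <= b -> c <= y <= d -> v t1 y1 <= v t y.
Proof.
  intros Hab Hcd Hc Hu.
  assert (Hex : forall y, {t | a <= t <= b /\ forall s, a <= s <= b -> v t y <= v s y}).
  { intros y. apply constructive_indefinite_description.
    destruct (continuity_ab_min (fun s => v s y) a b Hab (Hc y)) as [mx [H1 H2]].
    exists mx; split; auto. }
  set (T := fun y => proj1_sig (Hex y)).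
  assert (HT : forall y, a <= T y <= b /\ forall s, a <= s <= b -> v (T y) y <= v s y).
  { intros y; unfold T; destruct (Hex y); auto. }
  set (m := fun y => v (T y) y).
  assert (Hmc : forall y, continuity_pt m y).
  { intros y. apply continuity_pt_locally. intros eps.
    destruct (Hu y (eps/2)) as [rho [Hr Hrho]]; [pose proof (cond_pos eps); lra|].
    exists (mkposreal rho Hr). intros u Hb.
    assert (Hb' : Rabs (u - y) < rho) by exact Hb.
    assert (Hb'' : Rabs (y - u) < rho) by (rewrite Rabs_minus_sym; exact Hb').
    unfold m.
    destruct (HT u) as [HTu1 HTu2]. destruct (HT y) as [HTy1 HTy2].
    pose proof (Hrho u (T y) Hb' HTy1) as E1.
    pose proof (Hrho u (T u) Hb' HTu1) as E2.
    pose proof (HTu2 (T y) HTy1). pose proof (HTy2 (T u) HTu1).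
    pose proof (cond_pos eps).
    apply Rabs_def2 in E1. apply Rabs_def2 in E2.
    apply Rabs_def1; lra. }
  destruct (continuity_ab_min m c d Hcd (fun y _ => Hmc y)) as [y1 [Hy1' Hy1]].
  exists (T y1), y1. destruct (HT y1) as [H1 _]. split; auto. split; auto.
  intros t y Ht Hy. specialize (Hy1' y Hy). unfold m in Hy1'.
  destruct (HT y) as [_ H2]. specialize (H2 t Ht). lra.
Qed.

Lemma maxp (v v1 v2 : R -> R -> R) (q : R -> R) (a b c d C : R) :
  a < b -> c < d -> 0 <= C -> C * (d - c) < 1 ->
  (forall t, a <= t <= b -> 0 <= q t <= C) ->
  (forall y t, a <= t <= b -> continuity_pt (fun s => v s y) t) ->
  (forall t y, a <= t <= b -> is_derive (fun y => v t y) y (v2 t y - q t * v t y)) ->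
  (forall y t, a < t < b -> is_derive (fun s => v s y) t (v1 t y) /\
                            is_derive (fun s => v1 s y) t (v2 t y)) ->
  ucy v a b ->
  (forall t, a <= t <= b -> 0 < v t c) ->
  (forall y, c <= y <= d -> 0 < v a y /\ 0 < v b y) ->
  forall t, a < t < b -> 0 < v t d.
Proof.
  intros Hab Hcd HC HCd Hq Hct Hdy Hdt Hu Hbot Hside t0 Ht0.
  destruct (Rlt_dec 0 (v t0 d)) as [|Hn]; auto. exfalso.
  assert (Hcy : forall t y, a <= t <= b -> continuity_pt (fun y => v t y) y).
  { intros t y Ht. apply derivable_continuous_pt.
    exists (v2 t y - q t * v t y). apply is_derive_Reals. apply Hdy; auto. }
  destruct (continuity_ab_min (fun s => v s c) a b ltac:(lra) (Hct c)) as [m1 [Hm1 Hm1']].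
  destruct (continuity_ab_min (fun y => v a y) c d ltac:(lra) (fun y _ => Hcy a y ltac:(lra))) as [m2 [Hm2 Hm2']].
  destruct (continuity_ab_min (fun y => v b y) c d ltac:(lra) (fun y _ => Hcy b y ltac:(lra))) as [m3 [Hm3 Hm3']].
  simpl in Hm1, Hm2, Hm3.
  set (mu := Rmin (v m1 c) (Rmin (v a m2) (v b m3))).
  assert (Hmu : 0 < mu).
  { unfold mu. pose proof (Hbot m1 Hm1'). pose proof (proj1 (Hside m2 Hm2')).
    pose proof (proj2 (Hside m3 Hm3')). repeat apply Rmin_case; lra. }
  assert (Hmu1 : mu <= v m1 c) by (unfold mu; apply Rmin_l).
  assert (Hmu2 : mu <= v a m2) by (unfold mu; eapply Rle_trans; [apply Rmin_r| apply Rmin_l]).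
  assert (Hmu3 : mu <= v b m3) by (unfold mu; eapply Rle_trans; [apply Rmin_r| apply Rmin_r]).
  set (eps := mu / (2 * (d - c))).
  assert (Heps : 0 < eps) by (unfold eps; apply Rdiv_lt_0_compat; lra).
  assert (Heps2 : eps * (d - c) = mu / 2) by (unfold eps; field; lra).
  set (w := fun t y => v t y + eps * (y - d)).
  destruct (min2D w a b c d) as [t1 [y1 [Ht1 [Hy1 Hmin]]]]; [lra|lra| | |].
  { intros y t Ht. unfold w. apply continuity_pt_plus; [apply Hct; auto| apply continuity_pt_const; intros ? ?; auto]. }
  { intros y eta Heta. destruct (Hu y (eta/2)) as [rho [Hr Hrho]]; [lra|].
    assert (Hk : 0 < eta / (2 * eps + 1)) by (apply Rdiv_lt_0_compat; lra).
    exists (Rmin rho (eta / (2 * eps + 1))). split.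
    { apply Rmin_case; auto. }
    intros y' t Hy' Ht. unfold w.
    assert (H1 : Rabs (y' - y) < rho) by (eapply Rlt_le_trans; [exact Hy'| apply Rmin_l]).
    assert (H2 : Rabs (y' - y) < eta / (2 * eps + 1)) by (eapply Rlt_le_trans; [exact Hy'| apply Rmin_r]).
    specialize (Hrho y' t H1 Ht).
    assert (H3 : eps * Rabs (y' - y) <= eta / 2).
    { assert (eps * (eta / (2 * eps + 1)) <= eta / 2).
      { apply Rmult_le_reg_r with (2 * eps + 1); [lra|].
        field_simplify; [|lra]. nra. }
      pose proof (Rabs_pos (y' - y)). nra. }
    replace (v t y' + eps * (y' - d) - (v t y + eps * (y - d))) with
      ((v t y' - v t y) + eps * (y' - y)) by ring.
    eapply Rle_lt_trans; [apply Rabs_triang|].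
    rewrite Rabs_mult, (Rabs_right eps) by lra. lra. }
  assert (Hw0 : w t1 y1 <= 0).
  { specialize (Hmin t0 d ltac:(lra) ltac:(lra)). unfold w in Hmin |- *. lra. }
  assert (Hsm : forall y, c <= y <= d -> 0 < w a y /\ 0 < w b y).
  { intros y Hy. unfold w. pose proof (Hm2 y Hy). pose proof (Hm3 y Hy).
    assert (eps * (y - d) >= - (mu/2)) by nra. lra. }
  assert (Hbm : forall t, a <= t <= b -> 0 < w t c).
  { intros t Ht. unfold w. pose proof (Hm1 t Ht). lra. }
  assert (Ht1' : a < t1 < b).
  { destruct Ht1 as [[Ha|Ha] [Hb|Hb]]; subst; try (split; auto);
    pose proof (Hsm y1 Hy1); lra. }
  assert (Hy1' : c < y1).
  { destruct Hy1 as [[Hc|Hc] _]; auto. subst. pose proof (Hbm t1 Ht1). lra. }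
  destruct (second_deriv_nonneg (fun s => w s y1) (fun s => v1 s y1) a b t1 (v2 t1 y1))
    as [_ Hv2]; auto.
  { intros s Hs. unfold w. destruct (Hdt y1 s Hs) as [Hd1 _].
    replace (v1 s y1) with (v1 s y1 + 0) by ring.
    apply (is_derive_plus (fun s => v s y1) (fun _ => eps * (y1 - d))); auto.
    exact (is_derive_const (eps * (y1 - d)) s). }
  { apply (Hdt y1 t1 Ht1'). }
  { intros s Hs. apply Hmin; lra. }
  assert (HD : v2 t1 y1 - q t1 * v t1 y1 + eps * 1 <= 0).
  { apply (left_deriv_nonpos (fun y => w t1 y) c y1); auto.
    - unfold w. apply (is_derive_plus (fun y => v t1 y) (fun y => eps * (y - d))).
      + apply Hdy; lra.
      + apply is_derive_scal. replace 1 with (1 - 0) by ring.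
        apply (is_derive_minus (fun y => y) (fun _ => d)); [exact (is_derive_id y1)|exact (is_derive_const d y1)].
    - intros y Hy. apply Hmin; lra. }
  unfold w in Hw0. destruct (Hq t1 Ht1) as [Hq1 Hq2].
  assert (Hv : v t1 y1 <= eps * (d - y1)) by lra.
  assert (q t1 * v t1 y1 <= C * (eps * (d - c))).
  { apply Rle_trans with (q t1 * (eps * (d - y1))); [apply Rmult_le_compat_l; lra|].
    apply Rmult_le_compat; nra. }
  nra.
Qed.

Lemma sumn_ext n F G : (forall i, (i < n)%nat -> F i = G i) -> sumn_R n F = sumn_R n G.
Proof. induction n; simpl; intros H; auto. rewrite IHn by (intros; apply H; lia). rewrite H by lia. auto. Qed.

Lemma sumn_lin n F G c : sumn_R n (fun i => F i + c * G i) = sumn_R n F + c * sumn_R n G.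
Proof. induction n; simpl; [ring|]. rewrite IHn. ring. Qed.

Lemma sumn_scal n F c : sumn_R n (fun i => c * F i) = c * sumn_R n F.
Proof. induction n; simpl; [ring|]. rewrite IHn. ring. Qed.

Lemma is_derive_sumn n (F : nat -> R -> R) dF x :
  (forall i, (i < n)%nat -> is_derive (F i) x (dF i)) ->
  is_derive (fun x => sumn_R n (fun i => F i x)) x (sumn_R n dF).
Proof.
  induction n; simpl; intros H.
  - exact (is_derive_const 0 x).
  - apply (is_derive_plus (fun x => sumn_R n (fun i => F i x)) (F n)).
    + apply IHn; intros; apply H; lia.
    + apply H; lia.
Qed.

Lemma ucy_sumn n (F : nat -> R -> R -> R) a b :
  (forall i, (i < n)%nat -> ucy (F i) a b) ->
  ucy (fun t y => sumn_R n (fun i => F i t y)) a b.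
Proof.
  induction n; simpl; intros H.
  - intros y eta Heta. exists 1. split; [lra|]. intros. rewrite Rminus_0_r, Rabs_R0. auto.
  - intros y eta Heta.
    destruct (IHn ltac:(intros; apply H; lia) y (eta/2)) as [r1 [Hr1 H1]]; [lra|].
    destruct (H n ltac:(lia) y (eta/2)) as [r2 [Hr2 H2]]; [lra|].
    exists (Rmin r1 r2). split; [apply Rmin_case; auto|].
    intros y' t Hy Ht.
    assert (Hy1 : Rabs (y' - y) < r1) by (eapply Rlt_le_trans; [exact Hy| apply Rmin_l]).
    assert (Hy2 : Rabs (y' - y) < r2) by (eapply Rlt_le_trans; [exact Hy| apply Rmin_r]).
    specialize (H1 y' t Hy1 Ht). specialize (H2 y' t Hy2 Ht).
    match goal with |- Rabs (?A + ?B - (?C + ?D)) < _ =>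
      replace (A + B - (C + D)) with ((A - C) + (B - D)) by ring end.
    eapply Rle_lt_trans; [apply Rabs_triang|]. lra.
Qed.

Lemma ucy_prod (al phi : R -> R) a b :
  a <= b -> (forall y, continuity_pt al y) ->
  (forall t, a <= t <= b -> continuity_pt phi t) ->
  ucy (fun t y => al y * phi t) a b.
Proof.
  intros Hab Hal Hphi.
  destruct (continuity_ab_maj (fun t => Rabs (phi t)) a b Hab) as [tm [Htm _]].
  { intros c Hc. apply (continuity_pt_comp phi Rabs). auto. apply Rcontinuity_abs. }
  simpl in Htm. set (B := Rabs (phi tm)) in *.
  intros y eta Heta.
  assert (HB : 0 < B + 1) by (pose proof (Rabs_pos (phi tm)); unfold B; lra).
  destruct (proj1 (continuity_pt_locally al y) (Hal y) (mkposreal (eta / (B+1)) ltac:(apply Rdiv_lt_0_compat; lra))) as [r Hr].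
  exists r. split; [apply cond_pos|]. intros y' t Hy Ht.
  specialize (Hr y' Hy). simpl in Hr.
  rewrite <- Rmult_minus_distr_r, Rabs_mult.
  specialize (Htm t Ht).
  assert (Hlt : Rabs (al y' - al y) * (B + 1) < eta).
  { apply Rmult_lt_reg_r with (/ (B+1)). apply Rinv_0_lt_compat; lra.
    rewrite Rmult_assoc, Rinv_r by lra. rewrite Rmult_1_r. exact Hr. }
  pose proof (Rabs_pos (al y' - al y)). pose proof (Rabs_pos (phi t)). nra.
Qed.

Lemma locally_interval a b t : a < t < b -> locally t (fun s => a < s < b).
Proof.
  intros Ht. assert (H : 0 < Rmin (t - a) (b - t)) by (apply Rmin_case; lra).
  exists (mkposreal _ H). intros s Hs. simpl in Hs.
  assert (Hs' : Rabs (s - t) < Rmin (t - a) (b - t)) by exact Hs.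
  pose proof (Rmin_l (t-a) (b-t)). pose proof (Rmin_r (t-a) (b-t)).
  apply Rabs_def2 in Hs'. lra.
Qed.

Lemma sign_const f x y : x <= y -> (forall z, x <= z <= y -> continuity_pt f z) ->
  (forall z, x <= z <= y -> f z <> 0) -> forall z, x <= z <= y -> 0 < f x * f z.
Proof.
  intros Hxy Hc Hn z Hz.
  destruct (Req_dec x z) as [<-|Hne].
  { pose proof (Hn x ltac:(lra)). assert (f x * f x = (f x)^2) by ring.
    rewrite H0. apply pow2_gt_0. auto. }
  assert (Hfx := Hn x ltac:(lra)). assert (Hfz := Hn z Hz).
  destruct (Rtotal_order (f x) 0) as [H1|[H1|H1]]; [|contradiction|];
  destruct (Rtotal_order (f z) 0) as [H2|[H2|H2]]; try contradiction; try nra.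
  - destruct (Ranalysis5.IVT_interv f x z) as [w [Hw1 Hw2]]; auto.
    + intros; apply Hc; lra.
    + lra.
    + exfalso; apply (Hn w); auto; lra.
  - destruct (Ranalysis5.IVT_interv (fun s => - f s) x z) as [w [Hw1 Hw2]]; auto.
    + intros; apply continuity_pt_opp; apply Hc; lra.
    + lra.
    + lra.
    + lra.
    + exfalso; apply (Hn w); [lra|lra].
Qed.

Lemma eig_derivs G W mu h e : is_eigenfunction G W mu h -> (e < nE G)%nat ->
  forall t, 0 < t < len G e ->
  is_derive (h e) t (Derive (h e) t) /\
  is_derive (Derive (h e)) t ((W e t - mu) * h e t).
Proof.
  intros [dh [Hdh _]] He t Ht.
  destruct (Hdh e He) as [[_ [_ Hd]] Hin].
  assert (HD : forall s, 0 < s < len G e -> Derive (h e) s = dh e s).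
  { intros s Hs. apply is_derive_unique. apply Hd; auto. }
  split.
  - rewrite HD by auto. apply Hd; auto.
  - destruct (Hin t Ht) as [Hex Heq].
    apply (is_derive_ext_loc (dh e)).
    + generalize (locally_interval 0 (len G e) t Ht). apply filter_imp.
      intros s Hs. symmetry. apply HD; auto.
    + replace ((W e t - mu) * h e t) with (Derive (dh e) t) by lra.
      apply Derive_correct; auto.
Qed.

Theorem lemma6 (G : metric_graph) (W : gfun) (lam : nat -> R) (f : nat -> gfun)
  (M : nat) (kk : nat -> nat) (a : nat -> R) :
  graph_connected G ->
  potential_C1 G W ->
  eigen_system G W lam f ->
  W_generic G W ->
  (forall i j, (i < j)%nat -> (j < M)%nat -> (kk i < kk j)%nat) ->
  (forall i, (i < M)%nat -> a i <> 0) ->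
  forall e t0 y0, ~ isolated_interior_zero G (heat_comb lam f M kk a) e t0 y0.
Proof.
  intros _ HW Hes _ _ _ e t0 y0 [He [Ht0 [Hz [d0 [Hd0 Hiso]]]]].
  destruct Hes as [_ [Heig _]].
  set (L := len G e) in *.
  destruct HW as [HW1 _]. destruct (HW1 e He) as [dW [Hcont _]].
  assert (Hloc : locally (W e t0) (fun x => Rabs (x - W e t0) < 1))
    by (exists (mkposreal 1 Rlt_0_1); intros x Hx; exact Hx).
  pose proof (Hcont t0 ltac:(unfold L in *; lra) _ Hloc) as HWc.
  destruct HWc as [r1 Hr1].
  set (Kc := Rabs (W e t0) + 2).
  set (C := 2 * Rabs (W e t0) + 3).
  assert (HC : 0 < C) by (unfold C; pose proof (Rabs_pos (W e t0)); lra).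
  pose proof (cond_pos r1) as Hr1p.
  set (r := Rmin (Rmin r1 d0) (Rmin t0 (L - t0)) / 2).
  assert (Hr : 0 < r /\ r < r1 /\ r < d0 /\ r < t0 /\ r < L - t0).
  { unfold r. pose proof (Rmin_l (Rmin r1 d0) (Rmin t0 (L - t0))).
    pose proof (Rmin_r (Rmin r1 d0) (Rmin t0 (L - t0))).
    pose proof (Rmin_l r1 d0). pose proof (Rmin_r r1 d0).
    pose proof (Rmin_l t0 (L - t0)). pose proof (Rmin_r t0 (L - t0)).
    assert (0 < Rmin (Rmin r1 d0) (Rmin t0 (L - t0))) by (repeat apply Rmin_case; lra).
    lra. }
  destruct Hr as [Hr0 [Hr1' [Hr2 [Hr3 Hr4]]]].
  set (rho := Rmin (d0/2) (1/(2*C))).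
  assert (Hrho : 0 < rho /\ rho < d0 /\ C * rho < 1).
  { unfold rho. pose proof (Rmin_l (d0/2) (1/(2*C))). pose proof (Rmin_r (d0/2) (1/(2*C))).
    assert (0 < 1/(2*C)) by (apply Rdiv_lt_0_compat; lra).
    assert (C * (1/(2*C)) = 1/2) by (field; lra).
    split; [apply Rmin_case; lra|]. split; [lra|]. nra. }
  destruct Hrho as [Hrho0 [Hrho1 Hrho2]].
  set (ta := t0 - r). set (tb := t0 + r). set (yc := y0 - rho).
  set (coef := fun s i y => s * exp (- Kc * y) * (a i * exp (- lam (kk i) * y))).
  set (V := fun s t y => sumn_R M (fun i => coef s i y * f (kk i) e t)).
  set (V1 := fun s t y => sumn_R M (fun i => coef s i y * Derive (f (kk i) e) t)).
  set (V2 := fun s t y => sumn_R M (fun i => coef s i y * ((W e t - lam (kk i)) * f (kk i) e t))).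
  assert (Hrel : forall s t y, V s t y = s * exp (- Kc * y) * heat_comb lam f M kk a e t y).
  { intros s t y. unfold V, heat_comb. rewrite <- sumn_scal. apply sumn_ext.
    intros i _. unfold coef. ring. }
  assert (Dt : forall s y t, 0 < t < L -> is_derive (fun u => V s u y) t (V1 s t y) /\
                                      is_derive (fun u => V1 s u y) t (V2 s t y)).
  { intros s y t Ht. split.
    - apply (is_derive_sumn M (fun i u => coef s i y * f (kk i) e u)).
      intros i _. apply is_derive_scal. apply (eig_derivs G W (lam (kk i))); auto.
    - apply (is_derive_sumn M (fun i u => coef s i y * Derive (f (kk i) e) u)).
      intros i _. apply is_derive_scal. apply (eig_derivs G W (lam (kk i))); auto. }
  assert (Dy : forall s t y, is_derive (fun y => V s t y) y (V2 s t y - (W e t + Kc) * V s t y)).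
  { intros s t y.
    replace (V2 s t y - (W e t + Kc) * V s t y) with
      (sumn_R M (fun i => -(Kc + lam (kk i)) * (coef s i y * f (kk i) e t))).
    - apply (is_derive_sumn M (fun i y => coef s i y * f (kk i) e t)).
      intros i _. unfold coef. auto_derive; auto. ring.
    - replace (V2 s t y - (W e t + Kc) * V s t y) with (V2 s t y + (- (W e t + Kc)) * V s t y) by ring.
      unfold V2, V. rewrite <- sumn_lin. apply sumn_ext. intros i _. ring. }
  assert (Ct : forall s y t, 0 < t < L -> continuity_pt (fun u => V s u y) t).
  { intros s y t Ht. apply derivable_continuous_pt. exists (V1 s t y).
    apply is_derive_Reals. apply (Dt s y t Ht). }
  assert (Cy : forall s t y, continuity_pt (fun y => V s t y) y).
  { intros s t y. apply derivable_continuous_pt. eexists.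
    apply is_derive_Reals. apply (Dy s t y). }
  assert (U : forall s, ucy (V s) ta tb).
  { intros s. apply (ucy_sumn M (fun i t y => coef s i y * f (kk i) e t)).
    intros i _. apply (ucy_prod (coef s i) (f (kk i) e)).
    - unfold ta, tb; lra.
    - intros y. apply derivable_continuous_pt. exists (-(Kc + lam (kk i)) * coef s i y).
      apply is_derive_Reals. unfold coef. auto_derive; auto. ring.
    - intros t Ht. apply derivable_continuous_pt. exists (Derive (f (kk i) e) t).
      apply is_derive_Reals. apply (eig_derivs G W (lam (kk i))); auto.
      unfold ta, tb in Ht; fold L; lra. }
  set (u := V 1).
  assert (Hnz : forall t y, ta <= t <= tb -> yc <= y <= y0 -> (t <> t0 \/ y <> y0) -> u t y <> 0).
  { intros t y Ht Hy Hne Hu. unfold u in Hu. rewrite Hrel in Hu.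
    assert (Hg : heat_comb lam f M kk a e t y = 0).
    { pose proof (exp_pos (- Kc * y)). 
      destruct (Rmult_integral _ _ Hu) as [Hq|Hq]; auto. exfalso. nra. }
    unfold ta, tb, yc in *.
    destruct (Hiso t y) as [E1 E2]; auto.
    - fold L; lra.
    - apply Rabs_def1; lra.
    - apply Rabs_def1; lra.
    - destruct Hne; auto. }
  assert (Hab : ta < tb) by (unfold ta, tb; lra).
  assert (Hcy : yc < y0) by (unfold yc; lra).
  assert (Hin : forall t, ta <= t <= tb -> 0 < t < L) by (intros t Ht; unfold ta, tb in Ht; fold L; lra).
  assert (Sb : forall t, ta <= t <= tb -> 0 < u ta yc * u t yc).
  { apply (sign_const (fun t => u t yc)); [lra| |].
    - intros z Hzz. apply Ct. auto.
    - intros z Hzz. apply Hnz; [auto| lra| right; unfold yc; lra]. }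
  assert (Sl : forall y, yc <= y <= y0 -> 0 < u ta yc * u ta y).
  { apply (sign_const (fun y => u ta y)); [lra| |].
    - intros z Hzz. apply Cy.
    - intros z Hzz. apply Hnz; [lra| auto| left; unfold ta; lra]. }
  assert (Sr : forall y, yc <= y <= y0 -> 0 < u tb yc * u tb y).
  { apply (sign_const (fun y => u tb y)); [lra| |].
    - intros z Hzz. apply Cy.
    - intros z Hzz. apply Hnz; [lra| auto| left; unfold tb; lra]. }
  assert (Hus : forall s t y, V s t y = s * u t y).
  { intros s t y. unfold u. rewrite !Hrel. ring. }
  assert (Hex : exists s, (forall t, ta <= t <= tb -> 0 < V s t yc) /\ (forall y, yc <= y <= y0 -> 0 < V s ta y /\ 0 < V s tb y)).
  { pose proof (Sb tb ltac:(lra)) as Sab.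
    destruct (Rlt_dec 0 (u ta yc)) as [Hp|Hn].
    - assert (Hn2 : 0 < u tb yc) by nra.
      exists 1. split.
      + intros t Ht. rewrite Hus. pose proof (Sb t Ht). nra.
      + intros y Hy. rewrite !Hus. pose proof (Sl y Hy). pose proof (Sr y Hy). split; nra.
    - assert (Hn1 : u ta yc < 0).
      { destruct (Rtotal_order (u ta yc) 0) as [?|[E|?]]; auto; [rewrite E in Sab; lra| lra]. }
      assert (Hn2 : u tb yc < 0) by nra.
      exists (-1). split.
      + intros t Ht. rewrite Hus. pose proof (Sb t Ht). nra.
      + intros y Hy. rewrite !Hus. pose proof (Sl y Hy). pose proof (Sr y Hy). split; nra. }
  destruct Hex as [s [Hbot Hside]].
  assert (Hpos : 0 < V s t0 y0).
  { apply (maxp (V s) (V1 s) (V2 s) (fun t => W e t + Kc) ta tb yc y0 C).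
    - exact Hab.
    - exact Hcy.
    - lra.
    - unfold yc. replace (y0 - (y0 - rho)) with rho by ring. auto.
    - intros t Ht. assert (Hb : Rabs (W e t - W e t0) < 1).
      { apply Hr1.
        - change (Rabs (t - t0) < r1). apply Rabs_def1; unfold ta, tb in Ht; lra.
        - pose proof (Hin t Ht). fold L. lra. }
      apply Rabs_def2 in Hb. unfold Kc, C.
      pose proof (Rle_abs (W e t0)). pose proof (Rle_abs (- W e t0)).
      rewrite Rabs_Ropp in *. split; lra.
    - intros y t Ht. apply Ct. auto.
    - intros t y Ht. apply Dy.
    - intros y t Ht. apply Dt. unfold ta, tb in Ht. fold L; lra.
    - apply U.
    - exact Hbot.
    - exact Hside.
    - unfold ta, tb; lra. }
  rewrite Hrel, Hz, Rmult_0_r in Hpos. lra.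
Qed.
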